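(* Let $k,m\in\mathbb{N}$ and let $p_1,\ldots,p_m\in\mathbb{Z}[x_1,\ldots,x_k]$ be polynomials in $k$ variables with integer coefficients and without constant terms. Then for any finite partition $\mathcal{C}$ of $\mathbb{Z}$ and all sequences $f_1,\ldots,f_k:\mathbb{N}\to\mathbb{Z}$, there exist a cell $C\in\mathcal{C}$, an integer $a\in\mathbb{Z}$ and finite nonempty sets $F_1,\ldots,F_k\subseteq\mathbb{N}$ such that \[ \Big\{a+p_i\Big(\sum_{t\in F_1}f_1(t),\sum_{t\in F_2}f_2(t),\ldots,\sum_{t\in F_k}f_k(t)\Big): i=1,2,\ldots,m\Big\}\subseteq C. \]
   Context: $P_f(\mathbb{N})$ denotes the set of finite nonempty subsets of $\mathbb{N}$; the sets $F_1,\ldots,F_k$ are elements of $P_f(\mathbb{N})$ (the paper writes $F=F_1\times\cdots\times F_k\in\times_{i=1}^kP_f(\mathbb{N})$). *)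

(* Defs.v *)
From mathcomp Require Import all_boot all_order all_algebra.
From mathcomp Require Import finmap.
From mathcomp Require Export mpoly.
Set Implicit Arguments. Unset Strict Implicit. Unset Printing Implicit Defensive.

(* Main.v *)
Require Import Defs.
From mathcomp Require Import all_boot all_order all_algebra.
From mathcomp Require Import finmap.
From mathcomp Require Import mpoly.
From mathcomp Require Import ring zify.
From Stdlib Require Import FunctionalExtensionality.
From Stdlib Require ClassicalDescription.
From Stdlib Require List.
Import Order.TTheory GRing.Theory Num.Theory.
Local Open Scope ring_scope.
Set Implicit Arguments. Unset Strict Implicit. Unset Printing Implicit Defensive.


Section Dcalc.
Variable k : nat.
Local Notation V := ('I_k -> int).
Definition vadd (u v : V) : V := fun l => u l + v l.
Definition v0 : V := fun _ => 0.

Fixpoint D (d : nat) (h : V -> int) : Prop :=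
  match d with
  | 0%N => forall x, h x = 0
  | d'.+1 => forall v, D d' (fun x => h (vadd x v) - h x - h v)
  end.

Lemma D_ext d h g : (forall x, h x = g x) -> D d h -> D d g.
Proof.
elim: d h g => [|d IH] h g E /=; first by move=> H x; rewrite -E.
move=> H v; apply: IH (H v) => x; by rewrite !E.
Qed.

Lemma D0 d : D d (fun _ => 0).
Proof.
elim: d => [|d IH] //= v; apply: D_ext _ IH => x; by rewrite !subr0.
Qed.

Lemma D_add d h g : D d h -> D d g -> D d (fun x => h x + g x).
Proof.
elim: d h g => [|d IH] h g /=; first by move=> H G x; rewrite H G addr0.
move=> H G v; apply: D_ext _ (IH _ _ (H v) (G v)) => x; ring.
Qed.

Lemma D_scal d c h : D d h -> D d (fun x => c * h x).
Proof.
elim: d h => [|d IH] h /=; first by move=> H x; rewrite H mulr0.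
move=> H v; apply: D_ext _ (IH _ (H v)) => x; ring.
Qed.


Lemma D_opp d h : D d h -> D d (fun x => - h x).
Proof. move=> H; apply: D_ext _ (D_scal (-1) H) => x; ring. Qed.

Lemma D_sub d h g : D d h -> D d g -> D d (fun x => h x - g x).
Proof. move=> H G; exact: D_add H (D_opp G). Qed.

Lemma D_mono d h : D d h -> D d.+1 h.
Proof.
elim: d h => [|d IH] h /=.
  move=> H v; move=> x; rewrite !H; ring.
move=> H v; exact: IH (H v).
Qed.

Lemma D_le d e h : (d <= e)%N -> D d h -> D e h.
Proof.
move=> /subnK <-; elim: (e - d)%N => [|n IH] H; first by [].
have := D_mono (IH H); by rewrite addSn.
Qed.

Lemma vadd0 x : vadd x v0 = x.
Proof. apply: functional_extensionality => l; by rewrite /vadd /v0 addr0. Qed.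
Lemma vadd0l x : vadd v0 x = x.
Proof. apply: functional_extensionality => l; by rewrite /vadd /v0 add0r. Qed.
Lemma vaddC x y : vadd x y = vadd y x.
Proof. apply: functional_extensionality => l; by rewrite /vadd addrC. Qed.

Lemma D_at0 d h : D d h -> h v0 = 0.
Proof.
elim: d h => [|d IH] h /=; first by move=> H; rewrite H.
move=> H; have := IH _ (H v0); rewrite vadd0 => E.
have : - h v0 = 0 by rewrite -E; ring.
by move/eqP; rewrite oppr_eq0 => /eqP.
Qed.

Lemma D_mul n d e h g : (d + e <= n)%N -> D d h -> D e g -> D (d + e) (fun x => h x * g x).
Proof.
elim: n d e h g => [|n IH] d e h g.
  rewrite leqn0 addn_eq0 => /andP[/eqP-> /eqP->] /= H G x; by rewrite H mul0r.
case: d => [|d]; first by move=> _ /= H G; apply: D_ext _ (D0 e) => x; rewrite H mul0r.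
case: e => [|e]; first by move=> _ H /= G; rewrite addn0; apply: D_ext _ (D0 d.+1) => x; rewrite G mulr0.
move=> lt H G; rewrite addSn /= => v.
set Hv := fun x => h (vadd x v) - h x - h v.
set Gv := fun x => g (vadd x v) - g x - g v.
have HD : D d Hv by exact: H v.
have GD : D e Gv by exact: G v.
have le1 : (d + e.+1 <= n)%N by move: lt; rewrite addSn.
have le2 : (d.+1 + e <= n)%N by move: lt; rewrite addSn addnS.
have T1 : D (d + e.+1) (fun x => h x * g v).
  apply: D_le (_ : (d.+1 <= d + e.+1)%N) _; first by rewrite addnS ltnS leq_addr.
  apply: D_ext _ (D_scal (g v) H) => x; ring.
have T2 : D (d + e.+1) (fun x => h v * g x).
  apply: D_le (_ : (e.+1 <= d + e.+1)%N) _; first exact: leq_addl.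
  exact: D_scal.
have T3 : D (d + e.+1) (fun x => h x * Gv x).
  rewrite -addSnnS; exact: IH le2 H GD.
have T4 : D (d + e.+1) (fun x => h v * Gv x).
  apply: D_le (_ : (e <= d + e.+1)%N) _; first by rewrite addnS ltnW // ltnS leq_addl.
  exact: D_scal.
have T5 : D (d + e.+1) (fun x => Hv x * g x) by exact: IH le1 HD G.
have T6 : D (d + e.+1) (fun x => g v * Hv x).
  apply: D_le (_ : (d <= d + e.+1)%N) _; first exact: leq_addr.
  exact: D_scal.
have T7 : D (d + e.+1) (fun x => Hv x * Gv x).
  apply: D_le (_ : (d + e <= d + e.+1)%N) _; first by rewrite leq_add2l.
  apply: IH HD GD; by rewrite (leq_trans _ le1) // leq_add2l.
have := D_add (D_add (D_add T1 T2) (D_add T3 T4)) (D_add (D_add T5 T6) T7).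
apply: D_ext => x; rewrite /Hv /Gv; ring.
Qed.

Definition E d g := exists h c, D d h /\ forall x, g x = h x + c.

Lemma E_ext d h g : (forall x, h x = g x) -> E d h -> E d g.
Proof. move=> Q [h' [c [H1 H2]]]; exists h', c; split => // x; by rewrite -Q. Qed.

Lemma E_le d e g : (d <= e)%N -> E d g -> E e g.
Proof. move=> le [h [c [H1 H2]]]; exists h, c; split => //; exact: D_le H1. Qed.

Lemma E_const c : E 0 (fun _ => c).
Proof. exists (fun _ => 0), c; split => // x; by rewrite add0r. Qed.

Lemma E_coord l : E 1 (fun x => x l).
Proof.
exists (fun x => x l), 0; split; last by move=> x; rewrite addr0.
move=> v x /=; rewrite /vadd; ring.
Qed.

Lemma E_add d e g1 g2 : E d g1 -> E e g2 -> E (maxn d e) (fun x => g1 x + g2 x).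
Proof.
move=> [h1 [c1 [H1 E1]]] [h2 [c2 [H2 E2]]].
exists (fun x => h1 x + h2 x), (c1 + c2); split.
  apply: D_add; [apply: D_le H1; exact: leq_maxl | apply: D_le H2; exact: leq_maxr].
by move=> x; rewrite E1 E2; ring.
Qed.

Lemma E_mul d e g1 g2 : E d g1 -> E e g2 -> E (d + e) (fun x => g1 x * g2 x).
Proof.
move=> [h1 [c1 [H1 E1]]] [h2 [c2 [H2 E2]]].
exists (fun x => h1 x * h2 x + (c2 * h1 x + c1 * h2 x)), (c1 * c2); split.
  apply: D_add; first exact: D_mul (leqnn _) H1 H2.
  apply: D_add; [apply: D_le (leq_addr _ _) _ | apply: D_le (leq_addl _ _) _]; exact: D_scal.
by move=> x; rewrite E1 E2; ring.
Qed.

End Dcalc.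
Arguments E_const [k] c.
Arguments E_coord [k] l.
Arguments D_scal [k d] c [h].

Section Poly.
Variable k : nat.
Local Notation V := ('I_k -> int).

Lemma E_pow d (g : V -> int) n : E d g -> E (d * n) (fun x => g x ^+ n).
Proof.
move=> H; elim: n => [|n IH].
  rewrite muln0; apply: E_ext _ (E_const 1) => x; by rewrite expr0.
apply: E_ext _ (E_le _ (E_mul H IH)) => [x|]; first by rewrite exprS.
by rewrite mulnS.
Qed.

Lemma E_prod (I : Type) (s : seq I) (F : I -> V -> int) :
  (forall i, exists d, E d (F i)) -> exists d, E d (fun x => \prod_(i <- s) F i x).
Proof.
move=> HF; elim: s => [|i s [d IH]].
  exists 0%N; apply: E_ext _ (E_const 1) => x; by rewrite big_nil.
have [e He] := HF i; exists (e + d)%N; apply: E_ext _ (E_mul He IH) => x.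
by rewrite big_cons.
Qed.

Lemma E_sum (I : Type) (s : seq I) (F : I -> V -> int) :
  (forall i, exists d, E d (F i)) -> exists d, E d (fun x => \sum_(i <- s) F i x).
Proof.
move=> HF; elim: s => [|i s [d IH]].
  exists 0%N; apply: E_ext _ (E_const 0) => x; by rewrite big_nil.
have [e He] := HF i; exists (maxn e d); apply: E_ext _ (E_add He IH) => x.
by rewrite big_cons.
Qed.

Lemma E_meval (p : {mpoly int[k]}) : exists d, E d (fun x : V => p.@[x]).
Proof.
have [d Hd] : exists d, E d (fun x : V => \sum_(m <- msupp p) p@_m * \prod_i x i ^+ m i).
  apply: E_sum => m.
  have [d Hd] : exists d, E d (fun x : V => \prod_i x i ^+ m i).
    apply: E_prod => i; exists (1 * m i)%N; exact: E_pow (E_coord i).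
  exists (0 + d)%N; exact: E_mul (E_const _) Hd.
exists d; apply: E_ext _ Hd => x; by rewrite mevalE.
Qed.

Lemma meval_v0 (p : {mpoly int[k]}) : p.@[@v0 k] = p@_0%MM.
Proof.
elim/mpolyind: p => [|c m p _ _ IH]; first by rewrite meval0 mcoeff0.
rewrite mevalD mevalZ mevalX mcoeffD mcoeffZ mcoeffX IH; congr (_ * _ + _).
have [->|nz] := eqVneq m 0%MM.
  apply: big1 => i _; by rewrite mnm0E expr0.

have [i Hi] : exists i, m i != 0%N.
  apply/existsP; apply: contraR nz => /existsPn H; apply/eqP/mnmP => i.
  by rewrite mnm0E; apply/eqP; rewrite -[_ == _]negbK H.
rewrite (bigD1 i) //= /v0 expr0n (negbTE Hi) mul0r //.
Qed.

Lemma D_meval (p : {mpoly int[k]}) : p@_0%MM = 0 -> exists d, D d (fun x : V => p.@[x]).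
Proof.
move=> p0; have [d [h [c [Hh Hc]]]] := E_meval p; exists d.
have c0 : c = 0.
  have := Hc (@v0 k); rewrite meval_v0 p0 (D_at0 Hh) add0r => <- //.
apply: D_ext _ Hh => x; by rewrite Hc c0 addr0.
Qed.

End Poly.

Lemma mem_In (T : eqType) (x : T) (s : seq T) : x \in s -> List.In x s.
Proof. elim: s => [|y s IH] //=; rewrite inE => /orP[/eqP ->|/IH]; auto. Qed.

Lemma sum_In (I : Type) (x : I) (s : seq I) (F : I -> int) :
  (forall y, 0 <= F y) -> List.In x s -> F x <= \sum_(y <- s) F y.
Proof.
move=> F0; elim: s => [|y s IH] //= [->|/IH H]; rewrite big_cons.
  by rewrite lerDl sumr_ge0.
by rewrite (le_trans H) // lerDr.
Qed.

Section Comb.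
Variable k : nat.
Variable f : 'I_k -> nat -> int.
Local Notation V := ('I_k -> int).

Definition nv (A : {fset nat}) : V := fun l => \sum_(t <- A) f l t.
Definition intv (s M : nat) : {fset nat} := [fset t | t in iota s.+1 (M - s)%N]%fset.

Lemma in_intv t s M : (t \in intv s M) = (s < t <= M)%N.
Proof. rewrite /intv inE mem_iota; lia. Qed.

Lemma nv0 : nv fset0 = @v0 k.
Proof. apply: functional_extensionality => l; by rewrite /nv big_seq_fset0. Qed.

Lemma nvU (A B : {fset nat}) : (forall t, t \in A -> t \in B -> False) ->
  nv (A `|` B)%fset = vadd (nv A) (nv B).
Proof.
move=> dis; apply: functional_extensionality => l; rewrite /nv /vadd -big_cat /=.
apply: perm_big; apply: uniq_perm.
- exact: fset_uniq.
- rewrite cat_uniq !fset_uniq /= andbT; apply/hasPn => t tB; apply/negP => tA.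
  exact: dis tA tB.
- move=> t; rewrite mem_cat; exact: in_fsetU.
Qed.

Definition Dl (A : {fset nat}) (h : V -> int) : V -> int :=
  fun x => h (vadd (nv A) x) - h (nv A).

Definition allp (X : {fset nat}) (R : seq (V -> int)) (q : V -> int) : seq (V -> int) :=
  List.flat_map (fun A => List.map (fun h => fun x => Dl A h x - q x) R) (enum_fset (fpowerset X)).

Lemma allp_in X R q A h : (A `<=` X)%fset -> List.In h R ->
  List.In (fun x => Dl A h x - q x) (allp X R q).
Proof.
move=> AX hR; apply/List.in_flat_map; exists A; split.
  by apply: mem_In; rewrite fpowersetE.
by apply/List.in_map_iff; exists h.
Qed.

Lemma allp_inv X R q g : List.In g (allp X R q) ->
  exists A h, List.In h R /\ g = (fun x => Dl A h x - q x).
Proof.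
move/List.in_flat_map => [A [_ /List.in_map_iff [h [<- hR]]]]; by exists A, h.
Qed.

Definition FT (R : seq (V -> int)) : Prop :=
  forall (T : finType) (s : nat), exists L M : nat, forall c : int -> T,
  exists (a : int) (al : {fset nat}), al != fset0 /\ (al `<=` intv s M)%fset /\
    `|a| <= L%:Z /\ forall h, List.In h R -> c (a + h (nv al)) = c a.

Definition Done (R : seq (V -> int)) (T : finType) s (L M : nat) (c : int -> T) :=
  exists (a : int) (al : {fset nat}), al != fset0 /\ (al `<=` intv s M)%fset /\
    `|a| <= L%:Z /\ forall h, List.In h R -> c (a + h (nv al)) = c a.

Definition Cfg (R : seq (V -> int)) (T : finType) s (L M : nat) (c : int -> T) j :=
  exists (a : int) (cf : seq ({fset nat} * T)), size cf = j /\ uniq (map snd cf) /\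
    `|a| <= L%:Z /\ forall pr, pr \in cf -> pr.1 != fset0 /\ (pr.1 `<=` intv s M)%fset /\
    forall h, List.In h R -> c (a + h (nv pr.1)) = pr.2.

Definition chi (T : finType) (K : nat) (c : int -> T) (y : int) : {ffun 'I_(K.*2).+1 -> T} :=
  [ffun t : 'I_(K.*2).+1 => c (y + ((t : nat)%:Z - K%:Z))].

Lemma chi_eq (T : finType) K (c : int -> T) y1 y2 t :
  chi K c y1 = chi K c y2 -> `|t| <= K%:Z -> c (y1 + t) = c (y2 + t).
Proof.
move=> E Ht.
have Hn : (absz (t + K%:Z)%R < (K.*2).+1)%N by lia.
have Ht' : (absz (t + K%:Z)%R)%:Z - K%:Z = t by lia.
have := congr1 (fun F : {ffun _ -> T} => F (Ordinal Hn)) E; rewrite !ffunE /= Ht'; done.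
Qed.

Lemma sub_intv s M M' A : (M <= M')%N -> (A `<=` intv s M)%fset -> (A `<=` intv s M')%fset.
Proof.
move=> le /fsubsetP H; apply/fsubsetP => t /H; rewrite !in_intv; lia.
Qed.

Lemma sub_intv2 s M M' A : (s <= M)%N -> (A `<=` intv M M')%fset -> (A `<=` intv s (maxn M M'))%fset.
Proof.
move=> le /fsubsetP H; apply/fsubsetP => t /H; rewrite !in_intv; lia.
Qed.

Section Focus.
Variable R : seq (V -> int).
Variable q : V -> int.
Hypothesis R0 : forall h, List.In h R -> h (@v0 k) = 0.
Hypothesis IHR : forall X, FT (allp X R q).

Definition Bnd (X : {fset nat}) : int :=
  \sum_(A <- enum_fset (fpowerset X)) \sum_(h <- R) `|h (nv A)|.
Definition BQ (Y : {fset nat}) : int := \sum_(B <- enum_fset (fpowerset Y)) `|q (nv B)|.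

Lemma Bnd_ge0 X : 0 <= Bnd X.
Proof. apply: sumr_ge0 => A _; exact: sumr_ge0. Qed.

Lemma Bnd_le X A h : (A `<=` X)%fset -> List.In h R -> `|h (nv A)| <= Bnd X.
Proof.
move=> AX hR; apply: le_trans (sum_In (F := fun A => \sum_(h <- R) `|h (nv A)|) _ _).
- exact: (sum_In (F := fun h => `|h (nv A)|)).
- by move=> B; exact: sumr_ge0.
- by apply: mem_In; rewrite fpowersetE.
Qed.

Lemma BQ_le Y B : (B `<=` Y)%fset -> `|q (nv B)| <= BQ Y.
Proof.
move=> BY; apply: (sum_In (F := fun B => `|q (nv B)|)) => //.
by apply: mem_In; rewrite fpowersetE.
Qed.

Lemma focus (T : finType) (s : nat) j : exists L M : nat, (s <= M)%N /\
  forall c : int -> T, Done R s L M c \/ Cfg R s L M c j.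
Proof.
elim: j => [|j [L [M [sM HF]]]].
  exists 0%N, s; split => // c; right; exists 0, [::]; split => //; split => //.
set X := intv s M.
set K := absz (L%:Z + Bnd X).
have [L' [M' HIH]] := IHR X {ffun 'I_(K.*2).+1 -> T} M.
set Bq := absz (BQ (intv M M')).
exists (L' + L + Bq)%N, (maxn M M'); split; first exact: leq_trans sM (leq_maxl _ _).
move=> c.
have [b [be [be0 [beS [bL Hb]]]]] := HIH (chi K c).
have HW : forall g, List.In g (allp X R q) -> forall t, `|t| <= K%:Z ->
    c (b + g (nv be) + t) = c (b + t).
  move=> g Hg t Ht; exact: chi_eq (Hb g Hg) Ht.
have KL : L%:Z + Bnd X <= K%:Z by rewrite /K abszE ler_norm.
have BX := Bnd_ge0 X.
have BqE : `|q (nv be)| <= Bq%:Z.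
  rewrite /Bq abszE; apply: le_trans (ler_norm _); exact: BQ_le.
have MM : (M <= maxn M M')%N by exact: leq_maxl.
have [[a [al [al0 [alS [aL Ha]]]]] | [a [cf [sz [un [aL Hcf]]]]]] := HF (fun z => c (b + z)).
  left; exists (b + a), al; split => //; split; first exact: sub_intv alS.
  split; first by rewrite (le_trans (ler_normD _ _)) //; lia.
  by move=> h hR; rewrite -addrA (Ha h hR).
case: (boolP (c (b + a) \in map snd cf)) => [/mapP [pr prin prE] | notin].
  have [pr0 [prS Hpr]] := Hcf pr prin.
  left; exists (b + a), pr.1; split => //; split; first exact: sub_intv prS.
  split; first by rewrite (le_trans (ler_normD _ _)) //; lia.
  move=> h hR; rewrite -addrA (Hpr h hR); move: prE => /= E; symmetry; exact: E.
right; exists (b + a - q (nv be)), ((be, c (b + a)) :: [seq (pr.1 `|` be, pr.2)%fset | pr <- cf]).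
split; first by rewrite /= size_map sz.
split.
  rewrite /= -map_comp notin /=.
  by rewrite (eq_map (_ : snd \o _ =1 snd)).
split.
  rewrite (le_trans (ler_normB _ _)) // (le_trans (lerD (ler_normD _ _) BqE)) //; lia.
have disj : forall A, (A `<=` intv s M)%fset -> forall t, t \in A -> t \in be -> False.
  move=> A /fsubsetP AS t /AS tA /(fsubsetP beS) tB; move: tA tB; rewrite !in_intv; lia.
move=> pr; rewrite inE => /orP [/eqP -> | /mapP [pr0 pr0in ->]] /=.
  split => //; split; first exact: sub_intv2.
  move=> h hR.
  have g_in := allp_in q (fsub0set X) hR.
  have Ha0 : `|a| <= K%:Z by lia.
  have := HW _ g_in a Ha0; rewrite /Dl nv0 vadd0l R0 // => <-.
  congr c; ring.
have [A0 [AS HA]] := Hcf pr0 pr0in.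
split.
  apply: contraNneq A0 => /eqP; rewrite -fsubset0 => /fsubsetP H.
  by rewrite -fsubset0; apply/fsubsetP => t tA; apply: H; rewrite in_fsetU tA.
split.
  rewrite fsubUset (sub_intv MM AS) /=; exact: sub_intv2.
move=> h hR.
have g_in := allp_in q AS hR.
have Ht : `|a + h (nv pr0.1)| <= K%:Z.
  apply: le_trans (ler_normD _ _) _; apply: le_trans _ KL; apply: lerD => //; exact: Bnd_le AS hR.
have := HW _ g_in _ Ht; rewrite (HA h hR) /Dl => <-.
rewrite nvU; last exact: disj AS.
congr c; ring.
Qed.

Lemma FT_of : FT R.
Proof.
move=> T s; have [L [M [_ HF]]] := focus T s #|T|.
exists L, M => c; case: (HF c) => // [[a [cf [sz [un [aL Hcf]]]]]].
have : c a \in map snd cf.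
  apply: contraT => notin.
  have U : uniq (c a :: map snd cf) by rewrite /= notin.
  move/card_uniqP: U; rewrite /= size_map sz => E.
  by have := max_card (mem (c a :: map snd cf)); rewrite E ltnn.
case/mapP => pr prin prE.
have [pr0 [prS Hpr]] := Hcf pr prin.
exists a, pr.1; split => //; split => //; split => // h hR; rewrite (Hpr h hR); symmetry; exact: prE.
Qed.

End Focus.
End Comb.

Definition dec (P : Prop) : bool :=
  match ClassicalDescription.excluded_middle_informative P with left _ => true | right _ => false end.
Lemma decP (P : Prop) : dec P <-> P.
Proof. rewrite /dec; case: ClassicalDescription.excluded_middle_informative => //. Qed.

Lemma In_filter (T : Type) (p : pred T) x (s : seq T) :
  List.In x (filter p s) <-> List.In x s /\ p x.
Proof.
elim: s => [|y s IH] /=; first by split => // [[]].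
case py: (p y) => /=; rewrite IH.
  split => [[<-|[H1 H2]]|[[<-|H1] H2]]; [by split; [left|] | by split; [right|] | by left | by right; split].
split => [[H1 H2]|[[<-|H1] H2]]; [by split; [right|] | by rewrite py in H2 | by split].
Qed.

Definition lexlt (N : nat) (w' w : nat -> nat) :=
  exists d, (0 < d <= N)%N /\ (w' d < w d)%N /\ forall e, (d < e <= N)%N -> w' e = w e.

Lemma lex_ind N (P : (nat -> nat) -> Prop) :
  (forall w, (forall w', lexlt N w' w -> P w') -> P w) -> forall w, P w.
Proof.
elim: N P => [|N IHN] P H w.
  apply: H => w' [d [Hd _]]; lia.
suff: forall n w, w N.+1 = n -> P w by move=> /(_ _ w erefl).
clear w; move=> n; elim/ltn_ind: n => n IHn w1 wn1.
pose P' := fun w => w N.+1 = n -> P w.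
suff : P' w1 by apply.
apply: (IHN P') => w2 Hw wn2; apply: H => w' [d [Hd [lt Heq]]].
have [dN|dN] := eqVneq d N.+1.
  apply: (IHn (w' N.+1)); last by [].
  by rewrite -wn2 -dN.
apply: Hw; last by rewrite Heq //; lia.
exists d; split; first lia.
split => // e He; apply: Heq; lia.
Qed.

Section Weight.
Variable k : nat.
Variable f : 'I_k -> nat -> int.
Local Notation V := ('I_k -> int).

Definition Cov N (R : seq (V -> int)) (reps : nat -> seq (V -> int)) :=
  (forall e r, (0 < e <= N)%N -> List.In r (reps e) -> D e r) /\
  (forall h, List.In h R -> (forall x, h x = 0) \/
     exists e r, (0 < e <= N)%N /\ List.In r (reps e) /\ D e.-1 (fun x => h x - r x)).

Lemma Dl_D e A h : D e h -> D e.-1 (fun x => Dl f A h x - h x).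
Proof.
case: e => [|e] H.
  move=> x /=; by rewrite /Dl !H subrr.
apply: D_ext _ (H (nv f A)) => x; rewrite /Dl vaddC; ring.
Qed.

Lemma FT_nil : FT f [::].
Proof.
move=> T s; exists 0%N, s.+1 => c; exists 0, [fset s.+1]%fset; split.
  by apply/eqP => /fsetP /(_ s.+1); rewrite !inE eqxx.
split; first by apply/fsubsetP => t; rewrite inE => /eqP ->; rewrite in_intv; lia.
by split.
Qed.

Lemma main_ind N : forall w R reps, Cov N R reps -> (forall e, size (reps e) = w e) -> FT f R.
Proof.
elim/(@lex_ind N) => w IHw R reps [Crep Ch] Hsz.
pose R1 := filter (fun h => ~~ dec (forall x, h x = 0)) R.
have R1R : forall h, List.In h R1 -> List.In h R /\ ~ (forall x, h x = 0).
  move=> h /In_filter [hR /negP nz]; split => // Z; apply: nz; exact/decP.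
suff : FT f R1.
  move=> H T s; have [L [M HLM]] := H T s; exists L, M => c.
  have [a [al [al0 [alS [aL Ha]]]]] := HLM c.
  exists a, al; do 3!split => //.
  move=> h hR; case: (boolP (dec (forall x, h x = 0))) => [/decP Z | nz].
    by rewrite Z addr0.
  apply: Ha; apply/In_filter; by split.
have Rep : forall h, List.In h R1 -> exists e r, (0 < e <= N)%N /\ List.In r (reps e) /\ D e.-1 (fun x => h x - r x).
  move=> h /R1R [hR nz]; by case: (Ch h hR).
have hD : forall h e r, List.In r (reps e) -> (0 < e <= N)%N -> D e.-1 (fun x => h x - r x) -> D e h.
  move=> h e r rin eN Hr.
  have := D_add (D_le (leq_pred e) Hr) (Crep e r eN rin); apply: D_ext => x; ring.
case E1 : R1 => [|h0 R1']; first exact: FT_nil.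
have h0in : List.In h0 R1 by rewrite E1; left.
have [e0 [r0 [e0N [r0in _]]]] := Rep h0 h0in.
have ex : exists e, (0 < e <= N)%N && (0 < size (reps e))%N.
  exists e0; rewrite e0N /=; by case: (reps e0) r0in.
case: (ex_minnP ex) => d /andP [dN dpos] dmin.
rewrite -E1.
set q := head (fun _ => 0) (reps d).
have Erd : reps d = q :: behead (reps d) by rewrite /q; case: (reps d) dpos.
have qD : D d q by apply: Crep dN _; rewrite Erd; left.
apply: (FT_of (q := q)).
  move=> h /Rep [e [r [eN [rin Hr]]]]; exact: D_at0 (hD h e r rin eN Hr).
move=> X.
pose reps' := fun e => if e == d then List.map (fun r => fun x => r x - q x) (behead (reps d))
  else if e == d.-1 then filter (fun g => dec (D d.-1 g)) (allp f X R1 q) else reps e.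
have lx : lexlt N (fun e => size (reps' e)) w.
  exists d; split => //; split.
    have sm : forall (A B : Type) (g : A -> B) l, size (List.map g l) = size l.
      by move=> A B g; elim => //= x l ->.
    rewrite /reps' eqxx sm -Hsz Erd /=; exact: ltnSn.
  move=> e He; rewrite /reps' ifN_eq; last lia.
  rewrite ifN_eq; last lia.
  exact: Hsz.
apply: (IHw (fun e => size (reps' e)) lx (allp f X R1 q) reps'); last by [].
- split.
  + move=> e r eN; rewrite /reps'.
    case: eqP => [-> /List.in_map_iff [r1 [<- r1in]]|_].
      apply: D_sub qD; apply: Crep dN _; rewrite Erd; by right.
    case: eqP => [-> /In_filter [_ /decP //]|_]; exact: Crep.
  + move=> g gin; have [A [h [hR gE]]] := allp_inv gin; rewrite gE in gin *.
    have [e [r [eN [rin Hr]]]] := Rep h hR.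
    have de : (d <= e)%N by apply: dmin; rewrite eN /=; case: (reps e) rin.
    have hDe := hD h e r rin eN Hr.
    have DlD := Dl_D A hDe.
    have [ltde|eqde] := ltnP d e; last first.
      have ed : e = d by apply/eqP; rewrite eqn_leq eqde de.
      subst e; move: rin; rewrite Erd => -[rq|rin].
      * have gD : D d.-1 (fun x => Dl f A h x - q x).
          have := D_add DlD Hr; rewrite -rq; apply: D_ext => x; ring.
        case: (posnP d.-1) => [d1|d1].
          left => x; by move: gD; rewrite d1 /= => ->.
        right; exists d.-1, (fun x => Dl f A h x - q x); split; first lia.
        split.
          rewrite /reps' ifN_eq; last lia.
          rewrite eqxx; apply/In_filter; split; last exact/decP.
          exact: gin.
        apply: (@D_ext k _ (fun _ => 0)); last exact: D0. move=> x; ring.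
      * right; exists d, (fun x => r x - q x); split => //.
        split.
          rewrite /reps' eqxx; apply/List.in_map_iff; by exists r.
        have := D_add DlD Hr; apply: D_ext => x; ring.
    right; exists e, r; split => //; split.
      rewrite /reps' ifN_eq; last lia.
      rewrite ifN_eq //; lia.
    have qe : D e.-1 q by apply: D_le qD; lia.
    have := D_sub (D_add DlD Hr) qe; apply: D_ext => x; ring.
Qed.

End Weight.

Lemma degs (k m : nat) (p : 'I_m -> {mpoly int[k]}) (hp : forall i : 'I_m, (p i)@_0%MM = 0) :
  exists N, forall i : 'I_m, D N (fun x : 'I_k -> int => (p i).@[x]).
Proof.
suff : forall s : seq 'I_m, exists N, forall i, i \in s -> D N (fun x : 'I_k -> int => (p i).@[x]).
  move=> /(_ (enum 'I_m)) [N HN]; exists N => i; apply: HN; by rewrite mem_enum.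
elim => [|j s [N HN]]; first by exists 0%N.
have [d Hd] := D_meval (hp j).
exists (maxn d N) => i; rewrite inE => /orP [/eqP -> | /HN H].
  apply: D_le Hd; exact: leq_maxl.
apply: D_le H; exact: leq_maxr.
Qed.

Local Open Scope fset_scope.

Theorem mainTheorem3 (k m : nat) (p : 'I_m -> {mpoly int[k]})
  (hp : forall i : 'I_m, (p i)@_0%MM = 0)
  (r : nat) (c : int -> 'I_r) (f : 'I_k -> nat -> int) :
  exists (C : 'I_r) (a : int) (F : 'I_k -> {fset nat}),
    (forall l : 'I_k, F l != fset0) /\
    forall i : 'I_m,
      c (a + (p i).@[fun l : 'I_k => \sum_(t <- F l) f l t])%R = C.
Proof.
have ne : [fset 0%N] != fset0 by apply/eqP => /fsetP /(_ 0%N); rewrite !inE eqxx.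
case: (posnP m) => [m0 | mpos].
  exists (c 0), 0, (fun _ => [fset 0%N]); split => // i.
  by exfalso; have := ltn_ord i; move/leq_trans => /(_ _ (eq_leq m0)).
pose i0 : 'I_m := Ordinal mpos.
have [N HN] := @degs k m p hp.
pose R := List.map (fun i => fun x : 'I_k -> int => (p i).@[x] - (p i0).@[x]) (enum 'I_m).
pose reps := fun e => if e == N.+1 then R else [::].
have inR : forall i, List.In (fun x : 'I_k -> int => (p i).@[x] - (p i0).@[x]) R.
  move=> i; apply/List.in_map_iff; exists i; split => //; apply: mem_In; by rewrite mem_enum.
have Cv : Cov N.+1 R reps.
  split.
    move=> e h eN; rewrite /reps; case: eqP => [-> | _] //.
    move=> /List.in_map_iff [i [<- _]]; apply: D_sub; apply: D_mono; exact: HN.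
  move=> h /List.in_map_iff [i [<- _]]; right.
  exists N.+1, (fun x : 'I_k -> int => (p i).@[x] - (p i0).@[x]); split; first lia.
  split; first by rewrite /reps eqxx.
  apply: (@D_ext k _ (fun _ => 0)); last exact: D0.
  move=> x; ring.
have FTR := main_ind f Cv (fun e => erefl).
have [L [M HLM]] := FTR ('I_r : finType) 0%N.
have [a [al [al0 [_ [_ Ha]]]]] := HLM c.
exists (c a), (a - (p i0).@[nv f al]), (fun _ => al); split => // i.
rewrite -(Ha _ (inR i)); congr c; rewrite /nv; ring.
Qed.
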